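(* Let $\mathbb{X}$ be a two-dimensional smooth real Banach space and $\mathbb{H}$ a real Hilbert space (of dimension at least $2$). Let $T\in\mathbb{L}(\mathbb{X},\mathbb{H})$ be of rank one with $\|T\|=1$, and suppose $M_T=\{\pm x\}$. Then $T$ is an extreme contraction if and only if $(x,Tx)$ is not a CPP.
   Context: $M_T=\{x\in S_{\mathbb{X}}:\|Tx\|=\|T\|\}$. A norm one $T$ is an extreme contraction if it is an extreme point of the closed unit ball of $\mathbb{L}(\mathbb{X},\mathbb{H})$. $B(x,r)=\{u:\|u-x\|<r\}$. $x\perp_B y$ means $\|x+\lambda y\|\ge\|x\|$ for all real $\lambda$; $x^\perp=\{y:x\perp_By\}$. For $x\in S_{\mathbb{X}}$, $y\in S_{\mathbb{H}}$, $(x,y)$ is a CPP if there exist $r>0,\mu>0$ such that for all $z\in x^\perp\cap S_{\mathbb{X}}$, all $w\in y^\perp\cap S_{\mathbb{H}}$ and all $a,b\in\mathbb{R}$, $ax+bz\in B(x,r)\cap S_{\mathbb{X}}$ implies $\|ay+b\mu w\|\le1$. *)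

(* Defs.v *)
From HB Require Import structures.
From mathcomp Require Import all_boot all_order all_algebra.
From mathcomp Require Import all_classical all_reals all_analysis.
Set Implicit Arguments. Unset Strict Implicit. Unset Printing Implicit Defensive.
Import Order.TTheory GRing.Theory Num.Theory.
Import numFieldNormedType.Exports.
Local Open Scope classical_set_scope.
Local Open Scope ring_scope.

Section Defs.
Variable R : realType.

Definition islin (U V : lmodType R) (f : U -> V) : Prop :=
  forall (a : R) (u v : U), f (a *: u + v) = a *: f u + f v.

Definition isBL (X Y : normedModType R) (T : X -> Y) : Prop :=
  islin T /\ exists C : R, forall x, `|T x| <= C * `|x|.

Definition opnorm (X Y : normedModType R) (T : X -> Y) : R :=
  sup [set `|T x| | x in [set x : X | `|x| = 1]].

Definition normAttSet (X Y : normedModType R) (T : X -> Y) : set X :=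
  [set x | `|x| = 1 /\ `|T x| = opnorm T].

Definition dim2 (X : lmodType R) : Prop :=
  exists e1 e2 : X,
    (forall x : X, exists a b : R, x = a *: e1 + b *: e2) /\
    (forall a b : R, a *: e1 + b *: e2 = 0 -> a = 0 /\ b = 0).

Definition dim_ge2 (X : lmodType R) : Prop :=
  exists u v : X, forall a b : R, a *: u + b *: v = 0 -> a = 0 /\ b = 0.

Definition supp_fun (X : normedModType R) (x : X) (f : X -> R^o) : Prop :=
  islin f /\ (forall y, `|f y| <= `|y|) /\ f x = 1.

Definition smooth (X : normedModType R) : Prop :=
  forall x : X, `|x| = 1 ->
    forall f g : X -> R^o, supp_fun x f -> supp_fun x g -> forall y, f y = g y.

Definition hilbert_norm (H : normedModType R) : Prop :=
  exists ip : H -> H -> R,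
    (forall u v, ip u v = ip v u) /\
    (forall a u v w, ip (a *: u + v) w = a * ip u w + ip v w) /\
    (forall u, `|u| ^+ 2 = ip u u).

Definition rank_one (X Y : lmodType R) (T : X -> Y) : Prop :=
  (exists x, T x != 0) /\ exists y : Y, forall x, exists c : R, T x = c *: y.

Definition extreme_contraction (X Y : normedModType R) (T : X -> Y) : Prop :=
  opnorm T = 1 /\
  forall (T1 T2 : X -> Y) (t : R),
    isBL T1 -> isBL T2 -> opnorm T1 <= 1 -> opnorm T2 <= 1 ->
    0 < t < 1 -> (forall x, T x = t *: T1 x + (1 - t) *: T2 x) ->
    forall x, T1 x = T2 x.

Definition BJorth (X : normedModType R) (x y : X) : Prop :=
  forall l : R, `|x| <= `|x + l *: y|.

Definition CPP (X Y : normedModType R) (x : X) (y : Y) : Prop :=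
  `|x| = 1 /\ `|y| = 1 /\
  exists r mu : R, 0 < r /\ 0 < mu /\
    forall (z : X) (w : Y), BJorth x z -> `|z| = 1 -> BJorth y w -> `|w| = 1 ->
      forall a b : R, `|a *: x + b *: z - x| < r -> `|a *: x + b *: z| = 1 ->
        `|a *: y + (b * mu) *: w| <= 1.

End Defs.

(* Main.v *)
Require Import Defs.
From HB Require Import structures.
From mathcomp Require Import all_boot all_order all_algebra.
From mathcomp Require Import all_classical all_reals all_analysis.
From mathcomp Require Import ring lra.
Import Order.TTheory GRing.Theory Num.Theory.
Import numFieldNormedType.Exports.
Local Open Scope classical_set_scope.
Local Open Scope ring_scope.
Set Implicit Arguments. Unset Strict Implicit. Unset Printing Implicit Defensive.
Section Lin.
Variable R : realType.

Lemma lin0 (U V : lmodType R) (f : U -> V) : islin f -> f 0 = 0.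
Proof. move=> h; have := h 1 0 0; rewrite scale1r !addr0 scale1r => e.
by apply: (addrI (f 0)); rewrite addr0 -e. Qed.

Lemma linD (U V : lmodType R) (f : U -> V) : islin f -> forall u v, f (u + v) = f u + f v.
Proof. by move=> h u v; have := h 1 u v; rewrite !scale1r. Qed.

Lemma linZ (U V : lmodType R) (f : U -> V) : islin f -> forall a u, f (a *: u) = a *: f u.
Proof. by move=> h a u; have := h a u 0; rewrite (lin0 h) !addr0. Qed.

Lemma linN (U V : lmodType R) (f : U -> V) : islin f -> forall u, f (- u) = - f u.
Proof. by move=> h u; rewrite -scaleN1r (linZ h) scaleN1r. Qed.

Lemma linB (U V : lmodType R) (f : U -> V) : islin f -> forall u v, f (u - v) = f u - f v.
Proof. by move=> h u v; rewrite (linD h) (linN h). Qed.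

Lemma comb2 (X : lmodType R) (e1 e2 : X) a b p q r s :
  a *: (p *: e1 + q *: e2) + b *: (r *: e1 + s *: e2) = (a * p + b * r) *: e1 + (a * q + b * s) *: e2.
Proof. rewrite !scalerDr !scalerA !scalerDl; by rewrite addrACA. Qed.

Definition indep (X : lmodType R) (v1 v2 : X) := forall a b : R, a *: v1 + b *: v2 = 0 -> a = 0 /\ b = 0.

Lemma span2 (X : lmodType R) : dim2 X -> forall v1 v2 : X, indep v1 v2 ->
  forall u, exists a b : R, u = a *: v1 + b *: v2.
Proof.
move=> [e1 [e2 [hs hi]]] v1 v2 hv u.
move: hv. have [p [q ->]] := hs v1. have [r [s ->]] := hs v2. have [m [n ->]] := hs u.
move=> hv.
have hd : p * s - q * r != 0.
  apply/eqP => hd.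
  have h1 := hv s (- q). rewrite comb2 in h1.
  have h2 := hv r (- p). rewrite comb2 in h2.
  have [hs0 hq0] : s = 0 /\ - q = 0.
    apply: h1. have -> : s * p + - q * r = 0 by lra.
    have -> : s * q + - q * s = 0 by lra. by rewrite !scale0r addr0.
  have [hr0 hp0] : r = 0 /\ - p = 0.
    apply: h2. have -> : r * p + - p * r = 0 by lra.
    have -> : r * q + - p * s = 0 by lra. by rewrite !scale0r addr0.
  have := hv 1 0. rewrite scale0r addr0 scale1r.
  have -> : p = 0 by lra. have -> : q = 0 by lra. rewrite !scale0r addr0.
  by move=> /(_ erefl) [/eqP]; rewrite oner_eq0.
exists ((m * s - n * r) / (p * s - q * r)), ((p * n - q * m) / (p * s - q * r)).
rewrite comb2. congr (_ *: _ + _ *: _); field; exact: hd.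
Qed.

Lemma indep_uniq (X : lmodType R) (v1 v2 : X) : indep v1 v2 -> forall a b c d : R,
  a *: v1 + b *: v2 = c *: v1 + d *: v2 -> a = c /\ b = d.
Proof.
move=> hv a b c d /eqP; rewrite -subr_eq0 => /eqP h.
have [h1 h2] : a - c = 0 /\ b - d = 0.
  apply: hv. rewrite !scalerBl. rewrite -h. rewrite opprD. 
  rewrite addrACA. by [].
split; lra.
Qed.

Lemma coords (X : lmodType R) : dim2 X -> forall v1 v2 : X, indep v1 v2 ->
  exists c1 c2 : X -> R^o, islin c1 /\ islin c2 /\ forall u, u = c1 u *: v1 + c2 u *: v2.
Proof.
move=> hd v1 v2 hv.
have hc : forall u, exists p : R * R, u = p.1 *: v1 + p.2 *: v2.
  by move=> u; have [a [b e]] := span2 hd hv u; exists (a, b).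
have [f hf] := choice hc.
have key : forall a u v, (f (a *: u + v)).1 = a * (f u).1 + (f v).1 /\
                         (f (a *: u + v)).2 = a * (f u).2 + (f v).2.
  move=> a u v; apply: (indep_uniq hv). rewrite -hf.
  rewrite {1}(hf u) {1}(hf v) scalerDr !scalerA !scalerDl.
  by rewrite addrACA.
exists (fun u => (f u).1), (fun u => (f u).2); split; [|split].
- by move=> a u v; case: (key a u v).
- by move=> a u v; case: (key a u v).
- exact: hf.
Qed.

Lemma scR (a b : R) : a *: (b : R^o) = a * b. Proof. by []. Qed.

End Lin.
Section Hilb.
Variable R : realType.
Variable H : normedModType R.
Variable ip : H -> H -> R.
Hypothesis ipC : forall u v, ip u v = ip v u.
Hypothesis ipL : forall a u v w, ip (a *: u + v) w = a * ip u w + ip v w.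
Hypothesis ipN : forall u, `|u| ^+ 2 = ip u u.

Lemma ip0l w : ip 0 w = 0.
Proof. have := ipL 1 0 0 w; rewrite scale1r !addr0 mul1r => e.
by apply: (addrI (ip 0 w)); rewrite addr0 -e. Qed.
Lemma ipZl a u w : ip (a *: u) w = a * ip u w.
Proof. by have := ipL a u 0 w; rewrite addr0 ip0l addr0. Qed.
Lemma ipDl u v w : ip (u + v) w = ip u w + ip v w.
Proof. by have := ipL 1 u v w; rewrite scale1r mul1r. Qed.
Lemma ipZr a u w : ip w (a *: u) = a * ip w u.
Proof. by rewrite ipC ipZl ipC. Qed.
Lemma ipDr u v w : ip w (u + v) = ip w u + ip w v.
Proof. by rewrite ipC ipDl !(ipC w). Qed.
Lemma ipNl u w : ip (- u) w = - ip u w.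
Proof. by rewrite -scaleN1r ipZl mulN1r. Qed.

Lemma nexp (y v : H) a : `|y| = 1 -> ip v y = 0 ->
  `|a *: y + v| ^+ 2 = a ^+ 2 + `|v| ^+ 2.
Proof.
move=> hy hv; rewrite !ipN ipDl !ipDr !ipZl !ipZr -ipN hy (ipC y v) hv.
rewrite expr1n; ring.
Qed.

Lemma proj_le (y v : H) : `|y| = 1 -> (ip v y) ^+ 2 <= `|v| ^+ 2.
Proof.
move=> hy.
have e : v = (ip v y) *: y + (v - (ip v y) *: y) by rewrite addrC subrK.
have h0 : ip (v - (ip v y) *: y) y = 0.
  by rewrite ipDl ipNl ipZl -ipN hy expr1n mulr1 subrr.
rewrite {2}e nexp //. rewrite lerDl. exact: sqr_ge0.
Qed.

Lemma proj_abs (y v : H) : `|y| = 1 -> `|ip v y| <= `|v|.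
Proof.
move=> hy; have := proj_le v hy. rewrite -real_normK ?num_real //.
by rewrite ler_pXn2r // ?nnegrE ?normr_ge0.
Qed.

Lemma bj_ip (y w : H) : `|y| = 1 -> `|w| = 1 -> BJorth y w -> ip y w = 0.
Proof.
move=> hy hw hb.
have := hb (- ip y w).
have e : `|y + - ip y w *: w| ^+ 2 = 1 - (ip y w) ^+ 2.
  rewrite ipN ipDl !ipDr !ipZl !ipZr -!ipN hy hw (ipC w y). ring.
move=> h.
have h2 : `|y| ^+ 2 <= `|y + - ip y w *: w| ^+ 2.
  by rewrite ler_pXn2r // ?nnegrE ?normr_ge0.
rewrite e hy expr1n in h2.
have : (ip y w) ^+ 2 = 0 by have := sqr_ge0 (ip y w); lra.
by move/eqP; rewrite sqrf_eq0 => /eqP.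
Qed.

Lemma exists_orth (y : H) : dim_ge2 H -> `|y| = 1 -> exists w : H, `|w| = 1 /\ ip w y = 0.
Proof.
move=> [u [v huv]] hy.
have orth : forall t, ip (t - ip t y *: y) y = 0.
  by move=> t; rewrite ipDl ipNl ipZl -ipN hy expr1n mulr1 subrr.
have nz : (u - ip u y *: y != 0) \/ (v - ip v y *: y != 0).
  case: (eqVneq (u - ip u y *: y) 0) => hu; last by left.
  case: (eqVneq (v - ip v y *: y) 0) => hv; last by right.
  exfalso.
  move/eqP: hu; rewrite subr_eq0 => /eqP hu.
  move/eqP: hv; rewrite subr_eq0 => /eqP hv.
  move: (ip u y) (ip v y) hu hv => cu cv hu hv.
  have [h1 h2] : cv = 0 /\ - cu = 0.
    apply: huv. rewrite hu hv !scalerA mulNr scaleNr mulrC addrN //.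
  have [h3 _] : (1:R) = 0 /\ (0:R) = 0.
    apply: huv. rewrite scale1r scale0r addr0 hu.
    have -> : cu = 0 by lra. by rewrite scale0r.
  by move: h3; apply/eqP; rewrite oner_eq0.
case: nz => [hu|hv].
- exists (`|u - ip u y *: y|^-1 *: (u - ip u y *: y)); split.
    rewrite normrZ normfV normr_id mulVf //. by rewrite normr_eq0.
  by rewrite ipZl orth mulr0.
- exists (`|v - ip v y *: y|^-1 *: (v - ip v y *: y)); split.
    rewrite normrZ normfV normr_id mulVf //. by rewrite normr_eq0.
  by rewrite ipZl orth mulr0.
Qed.

End Hilb.
Section Op.
Variable R : realType.
Variables X Y : normedModType R.

Lemma opnorm_le (T : X -> Y) : isBL T -> forall u, `|T u| <= opnorm T * `|u|.
Proof.
move=> [hl [C hC]] u.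
case: (eqVneq u 0) => [->|hu].
  by rewrite (lin0 hl) !normr0 mulr0.
have hn : 0 < `|u| by rewrite normr_gt0.
set v := `|u|^-1 *: u.
have hv : `|v| = 1 by rewrite normrZ normfV normr_id mulVf // gt_eqF.
have hTv : `|T v| = `|T u| / `|u|.
  by rewrite /v (linZ hl) normrZ normfV normr_id mulrC.
have : `|T v| <= opnorm T.
  apply: ub_le_sup; last by exists v.
  exists C => _ [w hw <-]. have := hC w. by rewrite hw mulr1.
rewrite hTv ler_pdivrMr //.
Qed.

Lemma opnorm_ub (T : X -> Y) (x0 : X) : `|x0| = 1 ->
  (forall u, `|u| = 1 -> `|T u| <= 1) -> opnorm T <= 1.
Proof.
move=> hx0 h. apply: ge_sup.
  by exists `|T x0|, x0.
by move=> _ [w hw <-]; apply: h.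
Qed.

End Op.
Section Main.
Variable R : realType.
Variables (X H : normedModType R) (T : X -> H) (x : X).
Variable ip : H -> H -> R.
Hypothesis ipC : forall u v, ip u v = ip v u.
Hypothesis ipL : forall a u v w, ip (a *: u + v) w = a * ip u w + ip v w.
Hypothesis ipN : forall u, `|u| ^+ 2 = ip u u.
Hypothesis d2 : dim2 X.
Hypothesis sm : smooth X.
Hypothesis dge2 : dim_ge2 H.
Hypothesis hBL : isBL T.
Hypothesis hr1 : rank_one T.
Hypothesis hn : opnorm T = 1.
Hypothesis hM : normAttSet T = [set x; - x].

Let ipZl' := ipZl ipL. Let ipDl' := ipDl ipL. Let ipZr' := ipZr ipC ipL.
Let ipDr' := ipDr ipC ipL. Let ipNl' := ipNl ipL. Let nexp' := nexp ipC ipL ipN.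
Let proj_abs' := proj_abs ipC ipL ipN. Let bj_ip' := bj_ip ipC ipL ipN.
Let exists_orth' := exists_orth ipL ipN.

Let hTl : islin T. Proof. by case: hBL. Qed.

Lemma hx : `|x| = 1 /\ `|T x| = 1.
Proof.
have : normAttSet T x by rewrite hM; left.
by rewrite /normAttSet /= hn.
Qed.

Definition y := T x.
Definition phi (u : X) : R^o := ip (T u) y.

Lemma hy : `|y| = 1. Proof. by case: hx. Qed.
Lemma ipyy : ip y y = 1. Proof. by rewrite -ipN hy expr1n. Qed.

Lemma Tphi u : T u = phi u *: y.
Proof.
rewrite /phi. case: hr1 => _ [y0 hy0].
have [c ->] := hy0 u.
have [cx hcx] := hy0 x.
have cx0 : cx != 0.
  apply/eqP => e. have := hy. by rewrite /y hcx e scale0r normr0 => /eqP; rewrite eq_sym oner_eq0.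
have e : c *: y0 = (c / cx) *: y by rewrite /y hcx scalerA mulfVK.
by rewrite e ipZl' ipyy mulr1.
Qed.

Lemma phi_lin : islin phi.
Proof. by move=> a u v; rewrite /phi hTl ipL. Qed.

Lemma Tnorm u : `|T u| = `|phi u|.
Proof. by rewrite Tphi normrZ hy mulr1. Qed.

Lemma phi_le u : `|phi u| <= `|u|.
Proof. by rewrite -Tnorm; have := opnorm_le hBL u; rewrite hn mul1r. Qed.

Lemma phi_x : phi x = 1.
Proof. by rewrite /phi ipyy. Qed.

Lemma supp_phi : supp_fun x phi.
Proof. split; [exact: phi_lin|split; [exact: phi_le|exact: phi_x]]. Qed.

Lemma phi_norm1 v : `|v| = 1 -> `|phi v| = 1 -> v = x \/ v = - x.
Proof.
move=> h1 h2. have : normAttSet T v by rewrite /normAttSet /= hn Tnorm.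
by rewrite hM.
Qed.

Lemma smooth_orth z : `|z| = 1 -> BJorth x z -> phi z = 0.
Proof.
move=> hz hb.
have hi : indep x z.
  move=> a b e.
  case: (eqVneq a 0) => [a0|a0].
    split=> //. move: e; rewrite a0 scale0r add0r => /eqP.
    rewrite scaler_eq0 => /orP [/eqP //|/eqP z0].
    by move: hz; rewrite z0 normr0 => /eqP; rewrite eq_sym oner_eq0.
  exfalso.
  have := hb (b / a).
  have -> : x + (b / a) *: z = a^-1 *: (a *: x + b *: z).
    by rewrite scalerDr !scalerA mulVf // scale1r mulrC.
  rewrite e scaler0 normr0 (proj1 hx). by rewrite ler10.
have [c1 [c2 [l1 [l2 hc]]]] := coords d2 hi.
have [c1x _] : c1 x = 1 /\ c2 x = 0.
  apply: (indep_uniq hi). rewrite -hc scale1r scale0r addr0 //.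
have [c1z _] : c1 z = 0 /\ c2 z = 1.
  apply: (indep_uniq hi). rewrite -hc scale1r scale0r add0r //.
have hs : supp_fun x c1.
  split=> //; split=> // u.
  case: (eqVneq (c1 u) 0) => [->|h0]; first by rewrite normr0 normr_ge0.
  rewrite {2}(hc u).
  have -> : c1 u *: x + c2 u *: z = c1 u *: (x + (c2 u / c1 u) *: z).
    by rewrite scalerDr scalerA mulrCA mulfV // mulr1.
  rewrite normrZ. rewrite -{1}(mulr1 `|c1 u|). rewrite ler_wpM2l //.
  by have := hb (c2 u / c1 u); rewrite (proj1 hx).
have := sm (proj1 hx) supp_phi hs z. by rewrite c1z.
Qed.


Lemma exists_z1 : exists z1, `|z1| = 1 /\ phi z1 = 0.
Proof.
have [e1 [e2 [hs hi]]] := d2.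
set z' := phi e2 *: e1 - phi e1 *: e2.
have pz : phi z' = 0.
  by rewrite /z' (linB phi_lin) !(linZ phi_lin) !scR mulrC subrr.
have nz : z' != 0.
  apply/eqP => e.
  have [h1 h2] : phi e2 = 0 /\ - phi e1 = 0 by apply: hi; rewrite scaleNr.
  have [a [b ex]] := hs x.
  have := phi_x. rewrite ex (linD phi_lin) !(linZ phi_lin) ?scR h1.
  have -> : phi e1 = 0 by lra.
  by rewrite !mulr0 addr0 => /eqP; rewrite eq_sym oner_eq0.
exists (`|z'|^-1 *: z'); split.
  by rewrite normrZ normfV normr_id mulVf // normr_eq0.
by rewrite (linZ phi_lin) pz scaler0.
Qed.

Lemma bj_x z : phi z = 0 -> BJorth x z.
Proof.
move=> hz l. rewrite (proj1 hx).
have := phi_le (x + l *: z).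
by rewrite (linD phi_lin) (linZ phi_lin) ?scR hz mulr0 addr0 phi_x normr1.
Qed.

Lemma indep_xz z : phi z = 0 -> z != 0 -> indep x z.
Proof.
move=> hz z0 a b e.
have := congr1 phi e. rewrite (linD phi_lin) !(linZ phi_lin) ?scR hz phi_x.
rewrite (lin0 phi_lin) mulr0 addr0 mulr1 => a0; split=> //.
move: e; rewrite a0 scale0r add0r => /eqP; rewrite scaler_eq0 (negbTE z0) orbF.
by move/eqP.
Qed.

Lemma sq_norm_le (a : R) (v : H) : 0 <= a -> `|v| ^+ 2 <= a ^+ 2 -> `|v| <= a.
Proof. move=> ha h; have := normr_ge0 v; nra. Qed.

Lemma dirA (T1 T2 : X -> H) (t : R) :
  isBL T1 -> isBL T2 -> opnorm T1 <= 1 -> opnorm T2 <= 1 -> 0 < t < 1 ->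
  (forall u, T u = t *: T1 u + (1 - t) *: T2 u) ->
  forall x0, T1 x0 != T2 x0 -> CPP x y.
Proof.
move=> hB1 hB2 hn1 hn2 /andP [t0 t1] hT x0 hx0.
have hl1 : islin T1 by case: hB1.
have c1 : forall u, `|T1 u| <= `|u|.
  move=> u; apply: le_trans (opnorm_le hB1 u) _.
  by rewrite -{2}(mul1r `|u|) ler_wpM2r.
have c2 : forall u, `|T2 u| <= `|u|.
  move=> u; apply: le_trans (opnorm_le hB2 u) _.
  by rewrite -{2}(mul1r `|u|) ler_wpM2r.
pose S u := T1 u - T u.
have hS : islin S.
  move=> a u v; rewrite /S hl1 hTl scalerBr opprD addrACA //.
pose g u : R^o := ip (S u) y.
have gl : islin g.
  by move=> a u v; rewrite /g hS ipL.
have hT1 : forall u, T1 u = phi u *: y + S u.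
  by move=> u; rewrite /S -Tphi addrC subrK.
have ip1 : forall u, ip (T1 u) y = phi u + g u.
  by move=> u; rewrite hT1 ipL ipyy mulr1.
have b1 : forall u, `|phi u + g u| <= `|u|.
  move=> u; rewrite -ip1; apply: le_trans (c1 u).
  exact: proj_abs' hy.
have ip2 : forall u, phi u = t * (phi u + g u) + (1 - t) * ip (T2 u) y.
  by move=> u; rewrite -ip1 {1}/phi hT ipL ipZl'.
have gx : g x = 0.
  have h1 := b1 x. have h2 := ip2 x.
  have h3 : `|ip (T2 x) y| <= 1 by rewrite -(proj1 hx); apply: le_trans (c2 x); exact: proj_abs' hy.
  rewrite phi_x (proj1 hx) in h1; rewrite phi_x in h2.
  move: h1 h3; rewrite !ler_norml => /andP [h1 h1'] /andP [h3 h3'].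
  nra.
have g0 : forall u, g u = 0.
  have hs : supp_fun x (fun u => phi u + g u : R^o).
    split; [|split].
    - move=> a u v. rewrite phi_lin gl !scR. ring.
    - exact: b1.
    - by rewrite phi_x gx addr0.
  move=> u; have := sm (proj1 hx) supp_phi hs u. 
  by move=> e; apply: (addrI (phi u)); rewrite addr0 -e.
have key : forall u, phi u ^+ 2 + `|S u| ^+ 2 <= `|u| ^+ 2.
  move=> u. have := c1 u. rewrite hT1 => h.
  rewrite -(nexp' (phi u) hy (g0 u)).
  by rewrite ler_pXn2r ?nnegrE ?normr_ge0.
have Sx : S x = 0.
  have := key x. rewrite phi_x (proj1 hx) expr1n => h.
  have : `|S x| ^+ 2 = 0 by have := sqr_ge0 `|S x|; lra.
  by move/eqP; rewrite sqrf_eq0 normr_eq0 => /eqP.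
have Sx0 : S x0 != 0.
  apply: contra hx0 => /eqP e.
  have e1 : T1 x0 = T x0 by move: e; rewrite /S => /eqP; rewrite subr_eq0 => /eqP.
  have e2 : T2 x0 = T x0.
    have := hT x0. rewrite e1 => h.
    have ht : 1 - t != 0 by apply/eqP; lra.
    apply: (scalerI ht).
    rewrite [RHS]scalerBl scale1r {1}h addrAC subrr add0r //.
  by rewrite e1 e2.
have [z1 [hz1 pz1]] := exists_z1.
have z10 : z1 != 0 by apply/eqP => e; move: hz1; rewrite e normr0 => /eqP; rewrite eq_sym oner_eq0.
have hi := indep_xz pz1 z10.
have Sz1 : S z1 != 0.
  have [a [b e]] := span2 d2 hi x0.
  apply: contra Sx0 => /eqP Sz.
  by rewrite e (linD hS) !(linZ hS) Sx Sz !scaler0 addr0.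
split; first exact: (proj1 hx).
split; first exact: hy.
exists 1, `|S z1|; split=> //; split; first by rewrite normr_gt0.
move=> z w hbz hz hbw hw1 a b _ hu.
have pz := smooth_orth hz hbz.
have [p [q ez]] := span2 d2 hi z.
have p0 : p = 0.
  have := congr1 phi ez. rewrite pz (linD phi_lin) !(linZ phi_lin) !scR phi_x pz1.
  by rewrite mulr0 addr0 mulr1.
rewrite p0 scale0r add0r in ez.
have hq : `|q| = 1 by move: hz; rewrite ez normrZ hz1 mulr1.
have yw : ip w y = 0 by rewrite ipC; exact: bj_ip' hy hw1 hbw.
have pu : phi (a *: x + b *: z) = a.
  by rewrite (linD phi_lin) !(linZ phi_lin) !scR phi_x pz mulr0 addr0 mulr1.
have Su : `|S (a *: x + b *: z)| = `|b| * `|S z1|.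
  rewrite (linD hS) !(linZ hS) Sx scaler0 add0r ez (linZ hS) scalerA normrZ normrM hq mulr1 //.
have := key (a *: x + b *: z). rewrite pu Su hu expr1n => hk.
apply: sq_norm_le => //.
rewrite nexp' ?hy //; last by rewrite ipZl' yw mulr0.
rewrite normrZ hw1 mulr1 normrM expr1n.
by rewrite normr_id.
Qed.

Lemma dirB : CPP x y -> ~ extreme_contraction T.
Proof.
move=> [_ [_ [r [mu [r0 [mu0 hC]]]]]] [_ hE].
have [z1 [hz1 pz1]] := exists_z1.
have z10 : z1 != 0 by apply/eqP => e; move: hz1; rewrite e normr0 => /eqP; rewrite eq_sym oner_eq0.
have hi := indep_xz pz1 z10.
have bjz := bj_x pz1.
have [w [hw1 wy]] := exists_orth' dge2 hy.
have nyw : forall l, `|y + l *: w| ^+ 2 = 1 + l ^+ 2.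
  move=> l. have := nexp' 1 hy (v := l *: w). rewrite scale1r ipZl' wy mulr0 => ->//.
  by rewrite normrZ hw1 mulr1 expr1n real_normK ?num_real.
have bjw : BJorth y w.
  move=> l; rewrite hy. have := normr_ge0 (y + l *: w). have := nyw l.
  have := sqr_ge0 l. nra.
have [c1 [c2 [l1 [l2 hc]]]] := coords d2 hi.
have pc : forall u, phi u = c1 u.
  move=> u; rewrite {1}(hc u) (linD phi_lin) !(linZ phi_lin) !scR phi_x pz1.
  by rewrite mulr0 addr0 mulr1.
have hu : forall u, u = phi u *: x + c2 u *: z1 by move=> u; rewrite pc; exact: hc.
have [_ bz1] : c1 z1 = 0 /\ c2 z1 = 1.
  apply: (indep_uniq hi). rewrite -hc scale1r scale0r add0r //.
have hbeta : forall u, `|c2 u| <= 2 * `|u|.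
  move=> u.
  have e : c2 u *: z1 = u - phi u *: x by rewrite {2}(hu u) addrAC subrr add0r.
  have := congr1 (@Num.norm _ X) e. rewrite normrZ hz1 mulr1 => ->.
  apply: le_trans (ler_normB _ _) _.
  rewrite normrZ (proj1 hx) mulr1. have := phi_le u. lra.
pose N s := `|x + s *: z1|.
have N1 : forall s, 1 <= N s.
  move=> s; have := phi_le (x + s *: z1).
  by rewrite (linD phi_lin) (linZ phi_lin) scR pz1 mulr0 addr0 phi_x normr1.
have Ngt : forall s, s != 0 -> 1 < N s.
  move=> s s0. rewrite lt_neqAle N1 andbT. apply/eqP => e.
  have p1 : `|phi (x + s *: z1)| = 1.
    by rewrite (linD phi_lin) (linZ phi_lin) scR pz1 mulr0 addr0 phi_x normr1.
  case: (phi_norm1 (esym e) p1) => e2.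
  - have : s *: z1 = 0 by apply: (addrI x); rewrite addr0.
    move/eqP; rewrite scaler_eq0 (negbTE s0) (negbTE z10) //.
  - have [h2 _] : (2:R) = 0 /\ s = 0.
      apply: hi. have -> : (2:R) = 1 + 1 by [].
      by rewrite scalerDl scale1r -addrA e2 subrr.
    by move: h2; apply/eqP; rewrite pnatr_eq0.
have mono : forall l s, 0 <= l <= 1 -> N (l * s) <= N s.
  move=> l s /andP [l0 l1'].
  have e : x + (l * s) *: z1 = (1 - l) *: x + l *: (x + s *: z1).
    by rewrite scalerDr scalerA scalerBl scale1r addrA subrK.
  rewrite /N e. apply: le_trans (ler_normD _ _) _.
  rewrite !normrZ (proj1 hx) mulr1 !ger0_norm //; last by lra.
  have := N1 s. rewrite /N. nra.
pose s0 := r / 2.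
have s00 : 0 < s0 by rewrite /s0; lra.
pose m := Num.min (N s0) (N (- s0)).
have m1 : 1 < m.
  rewrite /m lt_min; apply/andP; split; apply: Ngt; apply/eqP; lra.
have mle1 : m <= N s0 by rewrite /m ge_min lexx.
have mle2 : m <= N (- s0) by rewrite /m ge_min lexx orbT.
have Nm : forall s, s0 <= `|s| -> m <= N s.
  move=> s hs.
  have sn0 : 0 < `|s| by lra.
  case: (lerP 0 s) => hs0.
  - rewrite ger0_norm // in hs sn0.
    apply: le_trans mle1 _.
    have hl : 0 <= s0 / s <= 1.
      apply/andP; split; [apply: divr_ge0; lra | rewrite ler_pdivrMr; lra].
    by have := mono _ s hl; rewrite mulfVK ?gt_eqF.
  - rewrite ltr0_norm // in hs sn0.
    apply: le_trans mle2 _.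
    have hl : 0 <= s0 / (- s) <= 1.
      apply/andP; split; [apply: divr_ge0; lra | rewrite ler_pdivrMr; lra].
    by have := mono _ s hl; rewrite invrN mulrN mulNr mulfVK ?lt_eqF.
pose q := Num.max (1 - r / 2) m^-1.
have m0 : 0 < m by lra.
have qle1 : 1 - r / 2 <= q by rewrite /q le_max lexx.
have qle2 : m^-1 <= q by rewrite /q le_max lexx orbT.
have q1 : q < 1.
  rewrite /q gt_max; apply/andP; split; first lra.
  by rewrite invf_lt1.
have q0 : 0 < q by rewrite /q lt_max invr_gt0 m0 orbT.
pose eps := Num.min mu ((1 - q) / 4).
have eps0 : 0 < eps by rewrite /eps lt_min mu0 /=; lra.
have epsmu : eps <= mu by rewrite /eps ge_min lexx.
have epsq : eps <= (1 - q) / 4 by rewrite /eps ge_min lexx orbT.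
have unitp : forall v, `|v| = 1 -> 0 <= phi v -> phi v ^+ 2 + eps ^+ 2 * c2 v ^+ 2 <= 1.
  move=> v hv pv.
  have hb := hbeta v. rewrite hv mulr1 in hb.
  have hb2 : c2 v ^+ 2 <= 4.
    rewrite -real_normK ?num_real //. have := normr_ge0 (c2 v). nra.
  have pv1 : phi v <= 1 by have := phi_le v; rewrite hv; move/(le_trans (ler_norm _)).
  case: (ltP `|v - x| r) => hr.
  - have := hC z1 w bjz hz1 bjw hw1 (phi v) (c2 v).
    rewrite -hu => /(_ hr hv) h.
    have h2 : `|phi v *: y + (c2 v * mu) *: w| ^+ 2 <= 1.
      have := normr_ge0 (phi v *: y + (c2 v * mu) *: w). nra.
    rewrite nexp' ?hy // in h2; last by rewrite ipZl' wy mulr0.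
    rewrite normrZ hw1 mulr1 real_normK ?num_real // in h2.
    have e2 : eps ^+ 2 <= mu ^+ 2 by nra.
    have : eps ^+ 2 * c2 v ^+ 2 <= mu ^+ 2 * c2 v ^+ 2 by apply: ler_wpM2r => //; exact: sqr_ge0.
    rewrite exprMn in h2. lra.
  - have aq : phi v <= q.
      have hvx : `|v - x| <= (1 - phi v) + `|c2 v|.
        rewrite {1}(hu v).
        have -> : phi v *: x + c2 v *: z1 - x = (phi v - 1) *: x + c2 v *: z1.
          by rewrite scalerBl scale1r addrAC.
        apply: le_trans (ler_normD _ _) _.
        rewrite !normrZ (proj1 hx) hz1 !mulr1 ler0_norm ?opprB //; lra.
      have [h1|h1] : r / 2 <= 1 - phi v \/ r / 2 <= `|c2 v|.
        case: (lerP (r / 2) (1 - phi v)) => h; [by left|right; lra].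
      + lra.
      + case: (eqVneq (phi v) 0) => [->|a0]; first exact: ltW.
        have ap : 0 < phi v by rewrite lt_neqAle eq_sym a0.
        have ev' : v = phi v *: (x + (c2 v / phi v) *: z1).
          by rewrite {1}(hu v) scalerDr scalerA mulrCA mulfV // mulr1.
        have ev : 1 = phi v * N (c2 v / phi v).
          by have := congr1 (@Num.norm _ X) ev'; rewrite normrZ gtr0_norm // hv.
        have hs : s0 <= `|c2 v / phi v|.
          rewrite normrM normfV (gtr0_norm ap) ler_pdivlMr //.
          rewrite /s0. nra.
        have := Nm _ hs => hN.
        apply: le_trans qle2.
        rewrite -[m^-1]mul1r ler_pdivlMr //. rewrite ev. nra.
    have a2 : phi v ^+ 2 <= q ^+ 2 by nra.
    have e2 : eps ^+ 2 <= ((1 - q) / 4) ^+ 2 by nra.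
    have e3 : eps ^+ 2 * c2 v ^+ 2 <= eps ^+ 2 * 4 by apply: ler_wpM2l => //; exact: sqr_ge0.
    have : q ^+ 2 + ((1 - q) / 4) ^+ 2 * 4 <= 1 by nra.
    lra.
have unit1 : forall v, `|v| = 1 -> phi v ^+ 2 + eps ^+ 2 * c2 v ^+ 2 <= 1.
  move=> v hv. case: (lerP 0 (phi v)) => pv; first exact: unitp.
  have := unitp (- v). rewrite normrN (linN phi_lin) (linN l2) !sqrrN.
  apply=> //. rewrite oppr_ge0; exact: ltW.
have gen : forall u, phi u ^+ 2 + eps ^+ 2 * c2 u ^+ 2 <= `|u| ^+ 2.
  move=> u. case: (eqVneq u 0) => [->|u0].
    by rewrite (lin0 phi_lin) (lin0 l2) normr0 expr0n /= mulr0 addr0.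
  have k0 : 0 < `|u| by rewrite normr_gt0.
  pose v := `|u|^-1 *: u.
  have eu : u = `|u| *: v by rewrite /v scalerA mulfV ?gt_eqF // scale1r.
  have hv : `|v| = 1 by rewrite /v normrZ normfV normr_id mulVf ?gt_eqF.
  have h := unit1 _ hv.
  have -> : phi u = `|u| * phi v by rewrite {1}eu (linZ phi_lin).
  have -> : c2 u = `|u| * c2 v by rewrite {1}eu (linZ l2).
  move: (phi v) (c2 v) h => p b h.
  have h' := ler_wpM2l (sqr_ge0 `|u|) h.
  rewrite !exprMn. lra.
pose Tg (e : R) (u : X) := T u + (e * c2 u) *: w.
have Tgl : forall e, islin (Tg e).
  move=> e a u v; rewrite /Tg hTl l2 scR mulrDr scalerDl.
  have -> : (e * (a * c2 u)) *: w = a *: ((e * c2 u) *: w) by rewrite scalerA mulrCA.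
  by rewrite scalerDr addrACA.
have Tgn : forall e, `|e| <= eps -> forall u, `|Tg e u| <= `|u|.
  move=> e he u. apply: sq_norm_le => //.
  rewrite /Tg Tphi nexp' ?hy //; last by rewrite ipZl' wy mulr0.
  rewrite normrZ hw1 mulr1 normrM exprMn !real_normK ?num_real //.
  have : e ^+ 2 <= eps ^+ 2.
    rewrite -real_normK ?num_real //. have := normr_ge0 e. nra.
  have := gen u. have := sqr_ge0 (c2 u). nra.
have TgB : forall e, `|e| <= eps -> isBL (Tg e).
  move=> e he; split; first exact: Tgl.
  by exists 1 => u; rewrite mul1r; apply: Tgn.
have Tgo : forall e, `|e| <= eps -> opnorm (Tg e) <= 1.
  move=> e he; apply: (opnorm_ub (proj1 hx)) => u hu1.
  by rewrite -hu1; apply: Tgn.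
have he1 : `|eps| <= eps by rewrite gtr0_norm.
have he2 : `|- eps| <= eps by rewrite normrN gtr0_norm.
have hdec : forall u, T u = (1/2) *: Tg eps u + (1 - 1/2) *: Tg (- eps) u.
  move=> u; rewrite /Tg mulNr scaleNr.
  have -> : (1 - 1/2 : R) = 1/2 by field.
  rewrite -scalerDr addrACA subrr addr0.
  rewrite -[X in X + X](scale1r (T u)) -scalerDl scalerA.
  have -> : (1 / 2 * (1 + 1) : R) = 1 by field.
  by rewrite scale1r.
have e0 : Tg eps z1 = Tg (- eps) z1.
  apply: (hE _ _ (1/2) (TgB _ he1) (TgB _ he2) (Tgo _ he1) (Tgo _ he2) _ hdec).
  apply/andP; split; lra.
move: e0; rewrite /Tg bz1 !mulr1 => e0.
have e : eps *: w = - eps *: w by apply: (addrI (T z1)).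
have := congr1 (fun v => ip v w) e. rewrite /= !ipZl' -ipN hw1 expr1n !mulr1.
apply/eqP; lra.
Qed.

End Main.
Theorem mainTheorem10 (R : realType) (X : normedModType R)
  (H : completeNormedModType R) (T : X -> H) (x : X) :
  dim2 X -> smooth X ->
  hilbert_norm H -> dim_ge2 H ->
  isBL T -> rank_one T -> opnorm T = 1 ->
  normAttSet T = [set x; - x] ->
  (extreme_contraction T <-> ~ CPP x (T x)).
Proof.
move=> d2 sm [ip [ipC [ipL ipN]]] dge2 hBL hr1 hn hM.
split.
- move=> hE hC.
  exact: (dirB ipC ipL ipN d2 dge2 hBL hr1 hn hM hC hE).
- move=> hnC; split=> // T1 T2 t hB1 hB2 hn1 hn2 ht hT x0.
  case: (eqVneq (T1 x0) (T2 x0)) => // hne.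
  exfalso; apply: hnC.
  exact: (dirA ipC ipL ipN d2 sm hBL hr1 hn hM hB1 hB2 hn1 hn2 ht hT hne).
Qed.
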